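(* Let $u:A^{\mathrm{ground}}\to[0,1]$ with $u(a_\bot)=1$ and $w:A^{\mathrm{ground}}\to\mathbb{R}$. Let $S^{\mathrm{best}}$ be the item list returned by the procedure BestPerm (described in the context) on input $(u,w)$. Then $f(S^{\mathrm{best}},u,w)=\max_{A\in\mathcal{A}}f(A,u,w)$.
   Context: $A^{\mathrm{ground}}=\{a_1,\dots,a_N,a_\bot\}$ with regular items $a_1,\dots,a_N$ and a virtual item $a_\bot$; $1\le m\le N$. $\mathcal{A}$ is the set of sequences consisting of between $1$ and $m$ distinct regular items followed by $a_\bot$. For a sequence $A$ of distinct items, $f(A,u,w)=\sum_{i=1}^{|A|}\prod_{j=1}^{i-1}(1-u(A(j)))u(A(i))w(A(i))$. Procedure BestPerm$(u,w)$: let $J$ be the number of regular items $a$ with $w(a)>w(a_\bot)$ and relabel these items $a_1,\dots,a_J$ so that $w(a_1)\ge\dots\ge w(a_J)$. If $J=0$: output $(a',a_\bot)$ where $a'$ maximizes $u(a)w(a)+(1-u(a))w(a_\bot)$ over regular items $a$. If $1\le J\le m$: output $(a_1,\dots,a_J,a_\bot)$. If $J>m$: compute tables $S[i][k]$ (sequences) and $F[i][k]$ (values) by: $S[J][1]=(a_J)$, $F[J][1]=u(a_J)w(a_J)+(1-u(a_J))w(a_\bot)$; for all $i\in[J]$, $S[i][0]=\emptyset$, $F[i][0]=w(a_\bot)$; for all $i\in[J]$ and $J-i+1<k\le m$, $F[i][k]=-\infty$; for $i=J-1,\dots,1$ and $k=1,\dots,\min\{m,J-i+1\}$: if $F[i+1][k]\ge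 u(a_i)w(a_i)+(1-u(a_i))F[i+1][k-1]$ then $S[i][k]=S[i+1][k]$, $F[i][k]=F[i+1][k]$, otherwise $S[i][k]=(a_i,S[i+1][k-1])$ (i.e. $a_i$ prepended), $F[i][k]=u(a_i)w(a_i)+(1-u(a_i))F[i+1][k-1]$. Output $S[1][m]$ followed by $a_\bot$. *)

(* Defs.v *)
(* Items: regular items a_1..a_N are 'I_N (as Some i),
   the virtual item a_bot is None : option 'I_N. *)
From HB Require Import structures.
From mathcomp Require Import all_boot all_order all_algebra.
Set Implicit Arguments. Unset Strict Implicit. Unset Printing Implicit Defensive.
Import Order.TTheory GRing.Theory Num.Theory.
Local Open Scope ring_scope.

Section Defs.
Variables (R : realFieldType) (N : nat).
Notation item := (option 'I_N).
Variables (u w : item -> R).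

Definition fval (A : seq item) : R :=
  \sum_(i < size A)
     (\prod_(j < i) (1 - u (nth None A j))) * u (nth None A i) * w (nth None A i).

Definition in_calA (m : nat) (A : seq item) : Prop :=
  exists s : seq 'I_N,
    [/\ uniq s, (1 <= size s)%N, (size s <= m)%N & A = map Some s ++ [:: None]].

Definition single_val (a : 'I_N) : R :=
  u (Some a) * w (Some a) + (1 - u (Some a)) * w None.

(* DP table: for the suffix t = (a_i, ..., a_J) of the relabelled list and k,
   dp t k = (F[i][k], S[i][k]), where F = None encodes -infinity.
   The base case F[J][1] = u(a_J)w(a_J)+(1-u(a_J))w(a_bot) arises from the
   general step with F[J+1][1] = -oo and F[J+1][0] = w(a_bot). *)
Fixpoint dp (t : seq 'I_N) (k : nat) : option R * seq 'I_N :=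
  match t, k with
  | _, 0%N => (Some (w None), [::])
  | [::], _.+1 => (None, [::])
  | a :: t', k'.+1 =>
      if (size t < k)%N then (None, [::]) else
      let cand := u (Some a) * w (Some a)
                  + (1 - u (Some a)) * odflt 0 (dp t' k').1 in
      match (dp t' k).1 with
      | Some F' => if cand <= F' then (Some F', (dp t' k).2)
                   else (Some cand, a :: (dp t' k').2)
      | None => (Some cand, a :: (dp t' k').2)
      end
  end.

(* BestPerm(u,w).  [s] is the relabelled list a_1..a_J (the regular items with
   w > w(a_bot), sorted by nonincreasing w), [a'] the maximizer used when J = 0. *)
Definition BestPerm (m : nat) (s : seq 'I_N) (a' : 'I_N) : seq item :=
  let J := size s in
  if J == 0%N then [:: Some a'; None]
  else if (J <= m)%N then map Some s ++ [:: None]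
  else map Some (dp s m).2 ++ [:: None].

End Defs.

(* Main.v *)
Require Import Defs.
From HB Require Import structures.
From mathcomp Require Import all_boot all_order all_algebra.
From mathcomp Require Import lra zify.
Import Order.TTheory GRing.Theory Num.Theory.
Local Open Scope ring_scope.

Section Aux.
Variables (R : realFieldType) (N : nat) (u w : option 'I_N -> R).
Hypothesis hu : forall a, 0 <= u a <= 1.

Definition V (x : seq 'I_N) : R :=
  foldr (fun a acc => u (Some a) * w (Some a) + (1 - u (Some a)) * acc) (w None) x.

Lemma fval_cons b l : fval u w (b :: l) = u b * w b + (1 - u b) * fval u w l.
Proof.
rewrite /fval big_ord_recl /= big_ord0 mul1r; congr (_ + _).
rewrite big_distrr /=; apply: eq_bigr => i _.
by rewrite big_ord_recl /= !mulrA.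
Qed.

Lemma fval_V (uN : u None = 1) x : fval u w (map Some x ++ [:: None]) = V x.
Proof.
elim: x => [|a x IH] /=.
  by rewrite /fval big_ord_recl big_ord0 /= big_ord0 uN !mul1r addr0.
by rewrite fval_cons IH.
Qed.

Lemma V_mono a r r' : V r <= V r' -> V (a :: r) <= V (a :: r').
Proof.
move=> H /=; rewrite lerD2l; apply: ler_wpM2l => //.
by have /andP[_ ?] := hu (Some a); rewrite subr_ge0.
Qed.

Lemma V_le K r : w None <= K -> (forall a, a \in r -> w (Some a) <= K) -> V r <= K.
Proof.
move=> H0; elim: r => [|a r IH] Hr //=.
have h1 : V r <= K by apply: IH => b hb; apply: Hr; rewrite inE hb orbT.
have h2 : w (Some a) <= K by apply: Hr; rewrite inE eqxx.
have /andP[ua0 ua1] := hu (Some a).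
nra.
Qed.

Lemma V_ge K r : K <= w None -> (forall a, a \in r -> K <= w (Some a)) -> K <= V r.
Proof.
move=> H0; elim: r => [|a r IH] Hr //=.
have h1 : K <= V r by apply: IH => b hb; apply: Hr; rewrite inE hb orbT.
have h2 : K <= w (Some a) by apply: Hr; rewrite inE eqxx.
have /andP[ua0 ua1] := hu (Some a).
nra.
Qed.

Definition good (a : 'I_N) := w None < w (Some a).

Lemma V_filter x : V x <= V (filter good x).
Proof.
elim: x => [|a x IH] //.
have -> : filter good (a::x) = if good a then a :: filter good x else filter good x by [].
case: ifP => Ha; first exact: V_mono.
apply: (le_trans (V_mono a x _ IH)); rewrite [V (a :: _)]/=.
have h1 : w None <= V (filter good x).
  by apply: V_ge => // b; rewrite mem_filter => /andP[/ltW].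
have h2 : w (Some a) <= w None by rewrite leNgt -/(good a) Ha.
have /andP[ua0 ua1] := hu (Some a).
nra.
Qed.

Lemma V_swap a b r : w (Some a) <= w (Some b) -> V (a :: b :: r) <= V (b :: a :: r).
Proof.
move=> H /=.
have /andP[ua0 ua1] := hu (Some a).
have /andP[ub0 ub1] := hu (Some b).
have H' : 0 <= w (Some b) - w (Some a) by rewrite subr_ge0.
have := mulr_ge0 (mulr_ge0 ua0 ub0) H'.
move: (V r) => v.
nra.
Qed.

Lemma V_move a y1 y2 : (forall b, b \in y1 -> w (Some a) <= w (Some b)) ->
  V (a :: y1 ++ y2) <= V (y1 ++ a :: y2).
Proof.
elim: y1 => [|b y1 IH] H //=.
apply: le_trans (V_swap _ _ _ (H b (mem_head _ _))) _.
apply: V_mono; apply: IH => c hc; apply: H; by rewrite inE hc orbT.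
Qed.

Definition rel (a b : 'I_N) := w (Some b) <= w (Some a).

Lemma V_perm g y : pairwise rel y -> perm_eq g y -> V g <= V y.
Proof.
elim: g y => [|a g IH] y Hy Hp.
  by move: (perm_size Hp) => /= /esym/size0nil ->.
have Ha : a \in y by rewrite -(perm_mem Hp) mem_head.
case/splitPr: Ha Hy Hp => y1 y2 Hy Hp.
move: Hy; rewrite pairwise_cat allrel_consr pairwise_cons => /and3P[/andP[H1 H2] H3 /andP[H4 H5]].
have Hp' : perm_eq g (y1 ++ y2).
  rewrite -(perm_cons a); apply: (perm_trans Hp).
  have -> : y1 ++ a :: y2 = y1 ++ [:: a] ++ y2 by [].
  by rewrite perm_catCA.
apply: (le_trans _ (V_move _ _ _ _)).
  by apply: V_mono; apply: IH => //; rewrite pairwise_cat H2 H3 H5.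
by move=> b hb; have := allP H1 b hb.
Qed.

Lemma subseq_cons_cases (c : 'I_N) s y : subseq y (c :: s) ->
  (exists2 y0, y = c :: y0 & subseq y0 s) \/ subseq y s.
Proof.
case: y => [|x y0] /=; first by right; exact: sub0seq.
case: eqP => [->|_] H; [left; exists y0 | right] => //.
Qed.
Arguments subseq_cons_cases {c s y}.

Lemma V_extend s : pairwise rel s -> all good s -> forall y k, subseq y s ->
  (size y <= k <= size s)%N -> exists y', [/\ subseq y' s, size y' = k & V y <= V y'].
Proof.
elim: s => [|c s IH] Hp Hg y k Hy /andP[H1 H2].
  move: Hy; rewrite subseq0 => /eqP ->; exists [::]; split => //.
  by move: H2; rewrite leqn0 => /eqP.
move: Hp; rewrite pairwise_cons => /andP[Hc Hp]; move: Hg => /= /andP[gc Hg].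
have Vs : V s <= V (c :: s).
  have h : V s <= w (Some c).
    by apply: V_le => [|b hb]; [exact: ltW | exact: (allP Hc b hb)].
  have /andP[u0 u1] := hu (Some c); rewrite [V (c :: s)]/=; nra.
case: (subseq_cons_cases Hy) => [[y0 ey Hy0]|Hy'].
  subst y; case: k H1 H2 => [|k] //= H1 H2.
  have [y0' [a1 a2 a3]] := IH Hp Hg y0 k Hy0 (introT andP (conj H1 H2)).
  exists (c :: y0'); split => //=; first by rewrite eqxx.
    by rewrite a2.
  exact: V_mono.
case: (leqP k (size s)) => Hk.
  have [y' [a1 a2 a3]] := IH Hp Hg y k Hy' (introT andP (conj H1 Hk)).
  by exists y'; split => //; apply: subseq_trans a1 (subseq_cons s c).
have Hsy := size_subseq Hy'.
have [y' [a1 a2 a3]] := IH Hp Hg y (size s) Hy' (introT andP (conj Hsy (leqnn _))).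
have ey : y' = s by apply/eqP; rewrite -(size_subseq_leqif a1).2 a2.
subst y'; exists (c :: s); split => //=; first by rewrite eqxx subseq_refl.
  by move: H2 Hk => /=; lia.
exact: le_trans Vs.
Qed.

Lemma dp_none t k : (size t < k)%N -> (dp u w t k).1 = None.
Proof. by case: t => [|a t]; case: k => // k /= ->. Qed.

Lemma dp_spec t k : (k <= size t)%N -> exists S, [/\ dp u w t k = (Some (V S), S),
  subseq S t, size S = k & forall y, subseq y t -> size y = k -> V y <= V S].
Proof.
elim: t k => [|a t IH] k Hk.
  move: Hk; rewrite leqn0 => /eqP ->; exists [::]; split => // y.
  by rewrite subseq0 => /eqP ->.
case: k Hk => [|k] Hk.
  by exists [::]; split => // y _ /size0nil ->.
have [S1 [e1 s1 z1 o1]] := IH k Hk.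
have Hc : forall y, subseq y (a :: t) -> size y = k.+1 -> subseq y t \/ V y <= V (a :: S1).
  move=> y Hy Hz; case: (subseq_cons_cases Hy) => [[y0 ey Hy0]|]; last by left.
  right; subst y; apply: V_mono; apply: o1 => //; by case: Hz.
rewrite /= ltnNge Hk /= e1 /=.
case: (leqP k.+1 (size t)) => Hk2.
  have [S2 [e2 s2 z2 o2]] := IH k.+1 Hk2.
  rewrite e2 /=; case: ifP => Hle.
    exists S2; split => //; first exact: subseq_trans s2 (subseq_cons t a).
    move=> y Hy Hz; case: (Hc y Hy Hz) => [Ht|H]; first exact: o2.
    exact: le_trans H Hle.
  exists (a :: S1); split => //=; first by rewrite eqxx.
    by rewrite z1.
  move=> y Hy Hz; case: (Hc y Hy Hz) => [Ht|H] //.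
  apply: le_trans (o2 y Ht Hz) _.
  by apply: ltW; rewrite ltNge Hle.
rewrite dp_none //=.
exists (a :: S1); split => //=; first by rewrite eqxx.
  by rewrite z1.
move=> y Hy Hz; case: (Hc y Hy Hz) => [Ht|H] //.
by have := size_subseq Ht; rewrite Hz leqNgt Hk2.
Qed.

Lemma reduce s (x : seq 'I_N) : pairwise rel s -> uniq s ->
  (forall a, (a \in s) = (w None < w (Some a))) -> uniq x ->
  exists y, [/\ subseq y s, (size y <= size x)%N & V x <= V y].
Proof.
move=> pS uS memS ux.
set g := filter good x.
set y := filter (fun z => z \in g) s.
have ug : uniq g by rewrite filter_uniq.
have pe : perm_eq g y.
  apply: uniq_perm => //; first by rewrite filter_uniq.
  move=> z; rewrite [in RHS]mem_filter.
  case: (boolP (z \in g)) => //= hz; rewrite memS.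
  by move: hz; rewrite mem_filter => /andP[].
exists y; split; first exact: filter_subseq.
  by rewrite -(perm_size pe) size_filter count_size.
apply: le_trans (V_filter x) _.
apply: V_perm => //; exact: pairwise_filter.
Qed.

Lemma main_sec (m : nat) (s : seq 'I_N) (a' : 'I_N) :
  (1 <= m)%N -> u None = 1 ->
  perm_eq s [seq a <- enum 'I_N | w None < w (Some a)] ->
  sorted (fun a b : 'I_N => w (Some b) <= w (Some a)) s ->
  (forall a : 'I_N, single_val u w a <= single_val u w a') ->
  (forall A, in_calA m A -> fval u w A <= fval u w (BestPerm u w m s a')) /\
  (exists2 A, in_calA m A & fval u w A = fval u w (BestPerm u w m s a')).
Proof.
move=> m1 uN Hperm Hsort Ha'.
have memS : forall a, (a \in s) = (w None < w (Some a)).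
  by move=> a; rewrite (perm_mem Hperm) mem_filter mem_enum andbT.
have uS : uniq s by rewrite (perm_uniq Hperm) filter_uniq // enum_uniq.
have Htr : transitive rel by move=> b a c h1 h2; exact: le_trans h2 h1.
have pS : pairwise rel s by rewrite -(sorted_pairwise Htr).
have gS : all good s by apply/allP => a; rewrite memS.
rewrite /BestPerm.
case: eqP => [J0|J0].
  have s0 : s = [::] by apply: size0nil.
  have -> : [:: Some a'; None] = map Some [:: a'] ++ [:: None] by [].
  rewrite fval_V //; split; last first.
    exists (map Some [:: a'] ++ [:: None]); last by rewrite fval_V.
    by exists ([:: a']); split.
  move=> A [x [ux x1 xm ->]]; rewrite fval_V //.
  case: x ux x1 xm => [|a r] //= _ _ _.
  have Vr : V r <= w None.
    apply: V_le => // b _; rewrite leNgt -memS s0 //.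
  have /andP[ua0 ua1] := hu (Some a).
  apply: le_trans (Ha' a); rewrite /single_val.
  rewrite lerD2l; apply: ler_wpM2l => //; by rewrite subr_ge0.
case: ifP => HJm.
  rewrite fval_V //; split; last first.
    exists (map Some s ++ [:: None]); last by rewrite fval_V.
  exists s; split => //.
    by case: (size s) J0.
  move=> A [x [ux x1 xm ->]]; rewrite fval_V //.
  have [y [sy zy Vy]] := @reduce s x pS uS memS ux.
  have [y' [a1 a2 a3]] := @V_extend s pS gS y _ sy (introT andP (conj (size_subseq sy) (leqnn _))).
  have ey : y' = s by apply/eqP; rewrite -(size_subseq_leqif a1).2 a2.
  subst y'; exact: le_trans a3.
have Hm : (m <= size s)%N by move: HJm => /negbT; rewrite -ltnNge => /ltnW.
have [S [e sS zS oS]] := @dp_spec s m Hm.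
rewrite e /= fval_V //; split; last first.
  exists (map Some S ++ [:: None]); last by rewrite fval_V.
  exists S; split; rewrite ?zS //; exact: subseq_uniq sS uS.
move=> A [x [ux x1 xm ->]]; rewrite fval_V //.
have [y [sy zy Vy]] := @reduce s x pS uS memS ux.
have Hk : (size y <= m <= size s)%N by rewrite Hm andbT (leq_trans zy xm).
have [y' [a1 a2 a3]] := @V_extend s pS gS y m sy Hk.
apply: le_trans Vy _; apply: le_trans a3 _; exact: oS.
Qed.

End Aux.

Theorem lemma2 (R : realFieldType) (N m : nat)
  (u w : option 'I_N -> R)
  (s : seq 'I_N) (a' : 'I_N) :
  (1 <= m)%N -> (m <= N)%N ->
  (forall a, 0 <= u a <= 1) -> u None = 1 ->
  (* s is a relabelling a_1..a_J of the regular items with w(a) > w(a_bot),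
     in nonincreasing order of w (any tie-breaking) *)
  perm_eq s [seq a <- enum 'I_N | w None < w (Some a)] ->
  sorted (fun a b : 'I_N => w (Some b) <= w (Some a)) s ->
  (* a' maximizes u(a)w(a) + (1-u(a))w(a_bot) over regular items *)
  (forall a : 'I_N, single_val u w a <= single_val u w a') ->
  let Sbest := BestPerm u w m s a' in
  (forall A, in_calA m A -> fval u w A <= fval u w Sbest) /\
  (exists2 A, in_calA m A & fval u w A = fval u w Sbest).
Proof.
move=> m1 _ hu uN Hp Hs Ha' Sbest.
exact: main_sec.
Qed.
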